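(* Let $\alpha,\beta$ be rationals in $(0,1)$, let $\mathsf{S}_1,\mathsf{S}_2,\ldots$ be positive rationals, and define $\mathsf{srtt}_1=\mathsf{S}_1$, $\mathsf{srtt}_j=(1-\alpha)\mathsf{srtt}_{j-1}+\alpha\mathsf{S}_j$ for $j>1$, and $\mathsf{rttvar}_1=\mathsf{S}_1/2$, $\mathsf{rttvar}_j=(1-\beta)\mathsf{rttvar}_{j-1}+\beta|\mathsf{srtt}_{j-1}-\mathsf{S}_j|$ for $j>1$. Let $c,r>0$ be rationals and $i\ge 2$, and suppose $\mathsf{S}_j\in[c-r,c+r]$ for all $j\ge i$. Then there is a sequence $(U_n)_{n\ge 0}$ with $\mathsf{rttvar}_{i+n}\le U_n$ for all $n$ and $\lim_{n\to\infty}U_n=2r$. *)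

(* Defs.v *)
From mathcomp Require Import all_boot all_order all_algebra.
Set Implicit Arguments. Unset Strict Implicit. Unset Printing Implicit Defensive.
Import Order.TTheory GRing.Theory Num.Theory.
Local Open Scope ring_scope.

(* Samples S_1, S_2, ... are given as S : nat -> rat; S 0 is unused.
   srtt alpha S j for j >= 1 follows the paper; srtt _ _ 0 := S 1 (junk). *)
Fixpoint srtt (alpha : rat) (S : nat -> rat) (j : nat) : rat :=
  match j with
  | 0 => S 1%N
  | 1 => S 1%N
  | (k.+1) as j' => (1 - alpha) * srtt alpha S k + alpha * S j'
  end.

Fixpoint rttvar (alpha beta : rat) (S : nat -> rat) (j : nat) : rat :=
  match j with
  | 0 => S 1%N / 2
  | 1 => S 1%N / 2
  | (k.+1) as j' =>
      (1 - beta) * rttvar alpha beta S k + beta * `|srtt alpha S k - S j'|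
  end.

Definition converges_to (U : nat -> rat) (l : rat) : Prop :=
  forall eps : rat, 0 < eps ->
    exists N : nat, forall n : nat, (N <= n)%N -> `|U n - l| < eps.

(* Main.v *)
Require Import Defs.
From mathcomp Require Import all_boot all_order all_algebra.
From mathcomp Require Import ring lra.
Import Order.TTheory GRing.Theory Num.Theory.
Local Open Scope ring_scope.
Lemma bern (n : nat) (x : rat) : 0 <= x -> 1 + n%:R * x <= (1 + x) ^+ n.
Proof.
move=> hx; elim: n => [|n IH]; first by rewrite expr0 mul0r addr0.
rewrite exprS -natr1.
have h0 : 0 <= n%:R * x by apply: mulr_ge0; rewrite ?ler0n.
have h2 : 0 <= ((1 + x) ^+ n - (1 + n%:R * x)) * (1 + x) by apply: mulr_ge0; lra.
have h3 : 0 <= n%:R * x * x by apply: mulr_ge0.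
move: h2 h3; generalize ((1 + x) ^+ n) (n%:R : rat) => P m h2 h3; nra.
Qed.

Lemma geo (rho M eps : rat) : 0 < rho -> rho < 1 -> 0 <= M -> 0 < eps ->
  exists N : nat, forall n, (N <= n)%N -> M * rho ^+ n < eps.
Proof.
move=> h0 h1 hM he.
set t := rho^-1 - 1.
have ht : 0 < t.
  rewrite /t subr_gt0 invf_gt1 //.
have hx : 0 <= M / (eps * t) by rewrite divr_ge0 // ltW // mulr_gt0.
exists (Num.Def.archi_bound (M / (eps * t))) => n hn.
have hb := archi_boundP hx.
have hn' : M / (eps * t) < n%:R.
  apply: (lt_le_trans hb); by rewrite ler_nat.
have hB := @bern n t (ltW ht).
have e1 : rho^-1 = 1 + t by rewrite /t; ring.
have hp : 0 < rho ^+ n by rewrite exprn_gt0.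
have hq : rho ^+ n * (1 + t) ^+ n = 1.
  by rewrite -exprMn -e1 mulfV ?expr1n // gt_eqF.
have : M < n%:R * (eps * t).
  by rewrite -ltr_pdivrMr ?mulr_gt0.
have hn0 : 0 <= n%:R :> rat by rewrite ler0n.
set P := rho ^+ n in hp hq *. set Q := (1 + t) ^+ n in hB hq *.
move=> hM2.
have hnt : 0 <= n%:R * t by apply: mulr_ge0 => //; exact: ltW.
have hQ : 0 < Q by lra.
(* M*P < eps  <=>  M < eps * Q since P*Q=1 *)
rewrite -(ltr_pM2r hQ) -mulrA hq mulr1.
have : eps * (1 + n%:R * t) <= eps * Q by rewrite ler_pM2l.
lra.
Qed.

Lemma srttS (alpha : rat) S (m : nat) : (1 <= m)%N ->
  srtt alpha S m.+1 = (1 - alpha) * srtt alpha S m + alpha * S m.+1.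
Proof. by case: m. Qed.

Lemma rttvarS (alpha beta : rat) S (m : nat) : (1 <= m)%N ->
  rttvar alpha beta S m.+1 =
  (1 - beta) * rttvar alpha beta S m + beta * `|srtt alpha S m - S m.+1|.
Proof. by case: m. Qed.

Theorem theorem4 (alpha beta : rat) (S : nat -> rat) (c r : rat) (i : nat) :
  0 < alpha -> alpha < 1 -> 0 < beta -> beta < 1 ->
  (forall j : nat, (1 <= j)%N -> 0 < S j) ->
  0 < c -> 0 < r -> (2 <= i)%N ->
  (forall j : nat, (i <= j)%N -> c - r <= S j <= c + r) ->
  exists U : nat -> rat,
    (forall n : nat, rttvar alpha beta S (i + n) <= U n) /\
    converges_to U (2 * r).
Proof.
move=> ha0 ha1 hb0 hb1 _ _ hr hi hS.
set k := i.-1.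
have hik : i = k.+1 by rewrite /k prednK // (leq_trans _ hi).
have hk : (1 <= k)%N by rewrite -ltnS -hik.
set a := fun n => srtt alpha S (k + n).
set b := fun n => rttvar alpha beta S (k + n).
have hSn : forall n, `|S (k + n).+1 - c| <= r.
  move=> n; have /andP[h1 h2] := hS (k + n).+1 ltac:(by rewrite hik ltnS leq_addr).
  rewrite ler_norml; apply/andP; split; lra.
have ha : forall n, a n.+1 = (1 - alpha) * a n + alpha * S (k + n).+1.
  by move=> n; rewrite /a addnS srttS // (leq_trans hk) // leq_addr.
have hb : forall n, b n.+1 = (1 - beta) * b n + beta * `|a n - S (k + n).+1|.
  by move=> n; rewrite /b /a addnS rttvarS // (leq_trans hk) // leq_addr.
set rho := 1 - alpha * beta / 2.
have hab : 0 < alpha * beta by apply: mulr_gt0.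
have hab2 : alpha * beta < beta by rewrite -[X in _ < X]mul1r ltr_pM2r.
have hab3 : alpha * beta < alpha by rewrite -[X in _ < X]mulr1 ltr_pM2l.
have hrho0 : 0 < rho by rewrite /rho; lra.
have hrho1 : rho < 1 by rewrite /rho; lra.
set D := `|a 0 - c|.
have hD : 0 <= D by rewrite /D normr_ge0.
set M := `|b 0| + 2 * D.
have hM : 0 <= M by rewrite /M; have := normr_ge0 (b 0); lra.
have hA : forall n, `|a n - c| <= r + rho ^+ n * D.
  elim=> [|n IH]; first by rewrite expr0 mul1r /D; lra.
  rewrite ha.
  have -> : (1 - alpha) * a n + alpha * S (k + n).+1 - c =
            (1 - alpha) * (a n - c) + alpha * (S (k + n).+1 - c) by ring.
  apply: (le_trans (ler_normD _ _)).
  have h2' : 0 <= 1 - alpha by lra.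
  rewrite !normrM (ger0_norm (ltW ha0)) (ger0_norm h2').
  have h1 := ler_wpM2l (ltW ha0) (hSn n).
  have h2 : 0 <= 1 - alpha by lra.
  have h3 := ler_wpM2l h2 IH.
  have hP : 0 <= rho ^+ n by rewrite exprn_ge0 // ltW.
  have h4 : 0 <= (rho - (1 - alpha)) * (rho ^+ n * D).
    by apply: mulr_ge0 => //; [rewrite /rho; lra | apply: mulr_ge0].
  rewrite exprS.
  move: h1 h3 h4; generalize (rho ^+ n) => P h1 h3 h4; nra.
have hB : forall n, b n <= 2 * r + M * rho ^+ n.
  elim=> [|n IH]; first by rewrite expr0 mulr1 /M; have := ler_norm (b 0); have := normr_ge0 (b 0); lra.
  rewrite hb.
  have hd : `|a n - S (k + n).+1| <= 2 * r + rho ^+ n * D.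
    have -> : a n - S (k + n).+1 = (a n - c) - (S (k + n).+1 - c) by ring.
    apply: (le_trans (ler_normB _ _)).
    have := hA n; have := hSn n; lra.
  have h1 := ler_wpM2l (ltW hb0) hd.
  have h2 : 0 <= 1 - beta by lra.
  have h3 := ler_wpM2l h2 IH.
  have hP : 0 <= rho ^+ n by rewrite exprn_ge0 // ltW.
  have h4 : 0 <= ((rho - 1 + beta) * M - beta * D).
    have e1 : 0 <= (rho - 1 + beta - beta / 2) * M by apply: mulr_ge0 => //; rewrite /rho; lra.
    have e2 : 0 <= beta / 2 * `|b 0| by apply: mulr_ge0 => //; lra.
    rewrite /M in e1 *; lra.
  have h5 := mulr_ge0 hP h4.
  rewrite exprS.
  move: h1 h3 h5; generalize (rho ^+ n) => P h1 h3 h5; nra.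
exists (fun n => 2 * r + M * rho ^+ n.+1); split.
  by move=> n; have := hB n.+1; rewrite /b hik addSnnS.
move=> eps he.
have [N HN] := @geo rho M eps hrho0 hrho1 hM he.
exists N => n hn.
have -> : 2 * r + M * rho ^+ n.+1 - 2 * r = M * rho ^+ n.+1 by ring.
rewrite ger0_norm; last by apply: mulr_ge0 => //; rewrite exprn_ge0 // ltW.
by apply: HN; apply: leqW.
Qed.
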